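(* Let $\varphi \in \mathcal{L}$. If there is a quasi-notional graded doxastic model (QNGDM) $M$ and a world $w$ of $M$ with $(M,w) \models \varphi$, then there exists a finite QNGDM $M'$ and a world $w'$ of $M'$ with $(M',w') \models \varphi$.
   Context: Fix a countably infinite set of atoms $\mathit{Atm}$ and a finite set of agents $\mathit{Agt}=\{1,\dots,n\}$; a group is a non-empty subset $J\subseteq \mathit{Agt}$, and $2^{\mathit{Agt}*}$ denotes the set of groups. $\mathbb{N}_0$ (resp. $\mathbb{N}_1$) are the naturals with (resp. without) $0$, and $\mathbb{N}_0^{\omega}=\mathbb{N}_0\cup\{\omega\}$, $\mathbb{N}_1^{\omega}=\mathbb{N}_1\cup\{\omega\}$ with $\omega$ an infinite element. A multiset over a set $X$ is a function $f:X\to\mathbb{N}_0^{\omega}$; its support is $\{x: f(x)>0\}$. A possibly infinite sum of grades equals the sum of its non-zero summands if there are finitely many of them and none is $\omega$, and equals $\omega$ otherwise. For $k\in\mathbb{N}_0$ and a group $J$, a partition of $k$ over $J$ is a function $\delta:J\to\mathbb{N}_0$ with $\sum_{i\in J}\delta(i)=k$; the set of these is $P(J,k)$. The language $\mathcal{L}_0$ is given by $\alpha ::= p \mid \neg\alpha \mid \alpha\wedge\alpha \mid \triangle_i^{k}\alpha$ with $p\in\mathit{Atm}$, $i\in\mathit{Agt}$, $k\in\mathbb{N}_1^{\omega}$ (''agent $i$ explicitly believes $\alpha$ with degree at least $k$''). The language $\mathcal{L}$ is given by $\varphi ::= \alpha \mid \neg\varphi\mid\varphi\wedge\varphi\mid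 \Box_J^{k}\varphi$ with $\alpha\in\mathcal{L}_0$, $J$ a group, $k\in\mathbb{N}_0$. A QNGDM is a tuple $M=(W,\mathcal{D},\rho,\mathcal{V})$ with $W$ a set of worlds, $\mathcal{D}:\mathit{Agt}\times W\to$ (multisets over $\mathcal{L}_0$), $\rho: 2^{\mathit{Agt}*}\times W\times W\to\mathbb{N}_0^{\omega}$, $\mathcal{V}:\mathit{Atm}\to 2^W$, with satisfaction: $(M,w)\models p$ iff $w\in\mathcal{V}(p)$; Boolean clauses as usual; $(M,w)\models\triangle_i^k\alpha$ iff $\mathcal{D}(i,w)(\alpha)\ge k$; $(M,w)\models\Box_J^k\varphi$ iff for all $u\in W$ with $\rho(J,w,u)\le k$, $(M,u)\models\varphi$; and such that for every group $J$ and $w,u\in W$ with $\rho(J,w,u)\neq\omega$: (i) $\rho(J,w,u)\ge \sum_{\alpha\in\mathcal{L}_0,\,(M,u)\not\models\alpha}\sum_{i\in J}\mathcal{D}(i,w)(\alpha)$; and (ii) there exists $\delta\in P(J,\rho(J,w,u))$ such that for every non-empty $J'\subset J$, $\sum_{i\in J'}\delta(i)\ge\rho(J',w,u)$. A QNGDM is finite if $W$ is finite and the support of $\mathcal{D}(i,w)$ is finite for every $i,w$. *)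

(* Defs.v *)
From mathcomp Require Import all_boot.
From Stdlib Require Import ClassicalEpsilon.
From Stdlib Require List.

Set Implicit Arguments.
Unset Strict Implicit.
Unset Printing Implicit Defensive.

Inductive ext := Fin of nat | Omega.

Definition ext_le (a b : ext) : Prop :=
  match a, b with
  | Fin x, Fin y => (x <= y)%N
  | _, Omega => True
  | Omega, Fin _ => False
  end.

Definition ext_pos (a : ext) : bool :=
  match a with Fin x => (0 < x)%N | Omega => true end.

Definition ext_val (a : ext) : nat := match a with Fin x => x | Omega => 0 end.

(** A (possibly infinite) sum of grades: it is the (finite) sum of the
    non-zero summands if these are finitely many and none is omega, and
    omega otherwise.  [xsum_witness f s m] says that [s] is a duplicate-free
    list containing every index with non-zero summand, no summand is omega,
    and [m] is the sum over [s]. *)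
Definition xsum_witness (T : Type) (f : T -> ext) (m : nat) : Prop :=
  exists s : seq T,
    List.NoDup s /\ (forall x, f x <> Fin 0 -> List.In x s) /\
    (forall x, f x <> Omega) /\ m = sumn (map (fun x => ext_val (f x)) s).

Definition xsum (T : Type) (f : T -> ext) : ext :=
  match excluded_middle_informative (exists m, xsum_witness f m) with
  | left H => Fin (proj1_sig (constructive_indefinite_description _ H))
  | right _ => Omega
  end.

Definition group (n : nat) := {J : {set 'I_n} | J != set0}.

Inductive form0 (n : nat) : Type :=
  | Atom0 : nat -> form0 n
  | Neg0 : form0 n -> form0 n
  | And0 : form0 n -> form0 n -> form0 n
  | Tri : 'I_n -> {k : ext | ext_pos k} -> form0 n -> form0 n.

Inductive form (n : nat) : Type :=
  | Base : form0 n -> form n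
  | Neg : form n -> form n
  | And : form n -> form n -> form n
  | Box : group n -> nat -> form n -> form n.

(** Underlying structure (W, D, rho, V) of a QNGDM; rho is given on all
    subsets but only its values on groups are ever used. *)
Record premodel (n : nat) := Premodel {
  W : Type;
  D : 'I_n -> W -> form0 n -> ext;
  rho : {set 'I_n} -> W -> W -> ext;
  V : nat -> W -> Prop
}.
Arguments W {n} p.
Arguments D {n} p _ _ _.
Arguments rho {n} p _ _ _.
Arguments V {n} p _ _.

Fixpoint sat0 (n : nat) (M : premodel n) (w : W M) (a : form0 n) : Prop :=
  match a with
  | Atom0 p => V M p w
  | Neg0 b => ~ @sat0 n M w b
  | And0 b c => @sat0 n M w b /\ @sat0 n M w c
  | Tri i k b => ext_le (proj1_sig k) (D M i w b)
  end.
Arguments sat0 {n} M w a.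

Fixpoint sat (n : nat) (M : premodel n) (w : W M) (f : form n) : Prop :=
  match f with
  | Base a => sat0 M w a
  | Neg g => ~ @sat n M w g
  | And g h => @sat n M w g /\ @sat n M w h
  | Box J k g => forall u : W M, ext_le (rho M (proj1_sig J) w u) (Fin k) -> @sat n M u g
  end.
Arguments sat {n} M w f.

Definition unsat_mass (n : nat) (M : premodel n) (J : {set 'I_n}) (w u : W M) : ext :=
  xsum (fun a : form0 n =>
    if excluded_middle_informative (sat0 M u a) then Fin 0
    else xsum (fun i : 'I_n => if i \in J then D M i w a else Fin 0)).
Arguments unsat_mass {n} M J w u.

Definition is_QNGDM (n : nat) (M : premodel n) : Prop :=
  forall (J : {set 'I_n}) (w u : W M), J != set0 ->
    forall r : nat, rho M J w u = Fin r ->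
      ext_le (unsat_mass M J w u) (Fin r) /\
      exists delta : 'I_n -> nat,
        (\sum_(i in J) delta i)%N = r /\
        forall J' : {set 'I_n}, J' != set0 -> J' \proper J ->
          ext_le (rho M J' w u) (Fin (\sum_(i in J') delta i)%N).
Arguments is_QNGDM {n} M.

Definition finite_premodel (n : nat) (M : premodel n) : Prop :=
  (exists s : seq (W M), forall w, List.In w s) /\
  (forall (i : 'I_n) (w : W M), exists s : seq (form0 n),
      forall a, D M i w a <> Fin 0 -> List.In a s).
Arguments finite_premodel {n} M.

(* Main.v *)
Require Import Defs.
From mathcomp Require Import all_boot.
From Stdlib Require Import ClassicalEpsilon FunctionalExtensionality Classical.
From Stdlib Require List.
From mathcomp Require Import zify.

Set Implicit Arguments.
Unset Strict Implicit.
Unset Printing Implicit Defensive.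

Section Aux.
Variable n : nat.

Fixpoint sub0 (a : form0 n) : seq (form0 n) :=
  a :: match a with
       | Atom0 _ => [::]
       | Neg0 b => sub0 b
       | And0 b c => sub0 b ++ sub0 c
       | Tri _ _ b => sub0 b
       end.

Fixpoint subf (f : form n) : seq (form n) :=
  f :: match f with
       | Base _ => [::]
       | Neg g => subf g
       | And g h => subf g ++ subf h
       | Box _ _ g => subf g
       end.

Fixpoint sub0L (f : form n) : seq (form0 n) :=
  match f with
  | Base a => sub0 a
  | Neg g => sub0L g
  | And g h => sub0L g ++ sub0L h
  | Box _ _ g => sub0L g
  end.

Fixpoint md (f : form n) : nat :=
  match f with
  | Base _ => 0
  | Neg g => md g
  | And g h => maxn (md g) (md h)
  | Box _ _ g => (md g).+1
  end.

Lemma In_mem (T : eqType) (x : T) (s : seq T) : x \in s -> List.In x s.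
Proof.
elim: s => [|y s IH] //=; rewrite in_cons => /orP [/eqP ->|/IH]; auto.
Qed.

Lemma In_nth (T : Type) (d : T) (s : seq T) j : j < size s -> List.In (nth d s j) s.
Proof.
elim: s j => [|y s IH] [|j] //= H; auto.
Qed.

Lemma nth_In (T : Type) (d : T) (s : seq T) x : List.In x s ->
  exists j, j < size s /\ nth d s j = x.
Proof.
elim: s => [|y s IH] //= [->|/IH [j [Hj Hn]]]; first by exists 0.
by exists j.+1.
Qed.

Lemma In_flatten (T U : Type) (F : T -> seq U) (s : seq T) u v :
  List.In u s -> List.In v (F u) -> List.In v (flatten (map F s)).
Proof.
elim: s => [|y s IH] //= [->|Hu] Hv; apply List.in_or_app; auto.
Qed.

Lemma In_map (T U : Type) (F : T -> U) (s : seq T) u :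
  List.In u s -> List.In (F u) (map F s).
Proof.
elim: s => [|y s IH] //= [->|Hu]; auto.
Qed.

Lemma In_app_l (T : Type) (s t : seq T) x : List.In x s -> List.In x (s ++ t).
Proof. move=> H; apply List.in_or_app; auto. Qed.
Lemma In_app_r (T : Type) (s t : seq T) x : List.In x t -> List.In x (s ++ t).
Proof. move=> H; apply List.in_or_app; auto. Qed.

End Aux.

Definition notx (T : Type) (x : T) (y : T) : bool :=
  if excluded_middle_informative (y = x) then false else true.

Lemma sumn_filter_le (T : Type) (h : T -> nat) p s :
  sumn (map h (filter p s)) <= sumn (map h s).
Proof.
elim: s => [|y s IH] //=; case: (p y) => /=.
  by rewrite leq_add2l.
by apply: (leq_trans IH); rewrite leq_addl.
Qed.

Lemma sumn_remove (T : Type) (h : T -> nat) x s : List.In x s ->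
  h x + sumn (map h (filter (notx x) s)) <= sumn (map h s).
Proof.
elim: s => [|y s IH] //= Hx.
rewrite /notx; case: excluded_middle_informative => [E|Hne] /=.
  by rewrite E leq_add2l sumn_filter_le.
case: Hx => [E|Hx]; first by case: Hne.
by rewrite addnCA leq_add2l; apply: IH.
Qed.

Lemma In_filter (T : Type) (p : pred T) s x : List.In x s -> p x -> List.In x (filter p s).
Proof.
elim: s => [|y s IH] //= [->|Hx] Hp; first by rewrite Hp /=; auto.
case: (p y) => /=; auto.
Qed.

Lemma sum_le (T : Type) (g h : T -> nat) (s' s : seq T) :
  List.NoDup s' -> (forall x, List.In x s' -> g x <> 0 -> List.In x s) ->
  (forall x, g x <= h x) -> sumn (map g s') <= sumn (map h s).
Proof.
elim: s' s => [|x s' IH] s //= ND Hin Hgh.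
inversion ND as [|x0 s0 Hnx ND']; subst.
case: (eqVneq (g x) 0) => Hg.
  rewrite Hg add0n; apply: IH => // z Hz; apply: Hin; auto.
have Hx : List.In x s by apply: Hin; auto; apply/eqP.
apply: leq_trans (sumn_remove h Hx).
apply: leq_add => //.
apply: IH => // z Hz Hgz; apply: In_filter.
  by apply: Hin; auto.
rewrite /notx; case: excluded_middle_informative => // E; subst; contradiction.
Qed.

Lemma xsum_le (T : Type) (f f' : T -> ext) :
  (forall a, f' a = f a \/ f' a = Fin 0) -> ext_le (xsum f') (xsum f).
Proof.
move=> Hf; rewrite /xsum.
case: (excluded_middle_informative (exists m, xsum_witness f m)) => [H|H];
  last by case: excluded_middle_informative.
case: (constructive_indefinite_description _ H) => m [s [ND [Hs [Hno Hm]]]] /=.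
case: excluded_middle_informative => [H'|H'].
  case: (constructive_indefinite_description _ H') => m' [s' [ND' [Hs' [Hno' Hm']]]] /=.
  rewrite Hm Hm'; apply: sum_le => //.
    move=> x _ Hx; apply: Hs; case: (Hf x) => E; last by rewrite E in Hx.
    by move=> E'; rewrite E E' in Hx.
  by move=> x; case: (Hf x) => ->.
case: H'; exists (sumn (map (fun x => ext_val (f' x)) s)), s; split => //; split.
  by move=> x Hx; apply: Hs; case: (Hf x) => E; rewrite -E.
split => // x; case: (Hf x) => ->; auto; discriminate.
Qed.

Lemma xsum0 (T : Type) (f : T -> ext) : (forall a, f a = Fin 0) -> xsum f = Fin 0.
Proof.
move=> Hf; rewrite /xsum; case: excluded_middle_informative => [H|H].
  case: (constructive_indefinite_description _ H) => m [s [ND [Hs [Hno Hm]]]] /=.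
  congr Fin; rewrite Hm; elim: s {ND Hs Hm} => //= x s ->; by rewrite Hf.
case: H; exists 0, [::]; split; first constructor.
split; first by move=> x; rewrite Hf.
by split => // x; rewrite Hf.
Qed.

Section Constr.
Variables (n : nat) (M : premodel n) (w : W M) (phi : form n).

Definition wit (u : W M) (f : form n) : W M :=
  match f with
  | Box J k g =>
      match excluded_middle_informative
              (exists v, ext_le (rho M (proj1_sig J) u v) (Fin k) /\ ~ sat M v g) with
      | left H => proj1_sig (constructive_indefinite_description _ H)
      | right _ => u
      end
  | _ => u
  end.

Lemma wit_spec u J k g :
  (exists v, ext_le (rho M (proj1_sig J) u v) (Fin k) /\ ~ sat M v g) ->
  ext_le (rho M (proj1_sig J) u (wit u (Box J k g))) (Fin k) /\ ~ sat M (wit u (Box J k g)) g.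
Proof.
move=> H /=; case: excluded_middle_informative => [H'|//].
by case: (constructive_indefinite_description _ H').
Qed.

Fixpoint lev (i : nat) : seq (W M) :=
  match i with
  | 0 => [:: w]
  | i.+1 => flatten (map (fun u => map (wit u) (subf phi)) (lev i))
  end.

Definition Dm := md phi.
Definition Nb := (\max_(i < Dm.+1) size (lev i)).+1.

Lemma size_lev (i : 'I_Dm.+1) : size (lev i) < Nb.
Proof. by rewrite ltnS (leq_bigmax i). Qed.

Definition W' := ('I_Dm.+1 * 'I_Nb)%type.
Definition mw (x : W') : W M := nth w (lev x.1) x.2.

Definition L0 := sub0L phi.

Definition newM : premodel n :=
  @Premodel n W'
    (fun i x a => if excluded_middle_informative (List.In a L0) then D M i (mw x) a else Fin 0)
    (fun J x y => if ((y.1 : nat) == (x.1 : nat).+1) && (y.2 < size (lev y.1))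
                  then rho M J (mw x) (mw y) else Omega)
    (fun p x => V M p (mw x)).

Lemma sat0_pres (x : W') (a : form0 n) :
  (forall b, List.In b (sub0 a) -> List.In b L0) ->
  (sat0 newM x a <-> sat0 M (mw x) a).
Proof.
elim: a => [p|b IH|b IHb c IHc|i k b IH] /= H.
- by [].
- rewrite IH; first by [].
  by move=> e He; apply: H; right.
- rewrite IHb ?IHc; first by [].
  + by move=> e He; apply: H; right; apply: In_app_r.
  + by move=> e He; apply: H; right; apply: In_app_l.
- case: excluded_middle_informative => // Hn; case: Hn; apply: H; right.
  by case: b {IH} => *; left.
Qed.


Lemma sat_pres (g : form n) : forall x : W',
  (forall h, List.In h (subf g) -> List.In h (subf phi)) ->
  (forall b, List.In b (sub0L g) -> List.In b L0) ->
  x.2 < size (lev x.1) -> md g + x.1 <= Dm ->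
  (sat newM x g <-> sat M (mw x) g).
Proof.
elim: g => [a|g IH|g IHg h IHh|J k g IH] x Hs H0 Hx Hd /=.
- by apply: sat0_pres.
- rewrite IH //; first by move=> e He; apply: Hs; right.
- rewrite IHg ?IHh //=.
  + by move=> e He; apply: Hs; right; apply: In_app_r.
  + by move=> e He; apply: H0; apply: In_app_r.
  + by move: Hd => /=; lia.
  + by move=> e He; apply: Hs; right; apply: In_app_l.
  + by move=> e He; apply: H0; apply: In_app_l.
  + by move: Hd => /=; lia.
- have Hs' : forall h, List.In h (subf g) -> List.In h (subf phi).
    by move=> e He; apply: Hs; right.
  have Hi1 : (x.1 : nat).+1 < Dm.+1 by move: Hd => /=; lia.
  pose i1 := Ordinal Hi1.
  split.
  + move=> H u Hu; apply: NNPP => Hg.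
    have [Hr Hng] := wit_spec (ex_intro _ u (conj Hu Hg)).
    set v := wit (mw x) (Box J k g) in Hr Hng.
    have Hv : List.In v (lev i1).
      apply: (In_flatten (u := mw x)); first by apply: In_nth.
      by apply: In_map; apply: Hs; left.
    have [j [Hj Hjv]] := nth_In w Hv.
    have HjN : j < Nb by apply: leq_trans Hj (ltnW (size_lev i1)).
    pose y : W' := (i1, Ordinal HjN).
    have Hmy : mw y = v by [].
    apply: Hng; rewrite -Hmy -(IH y) //.
    * apply: H => /=; rewrite eqxx Hj /=; by rewrite Hmy.
    * by move: Hd => /=; lia.
  + move=> H y; case E: (_ && _); last by [].
    move/andP: E => [/eqP E1 E2] Hr.
    rewrite IH //; first by apply: H.
    by move: Hd; rewrite E1 /=; lia.
Qed.

End Constr.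

Lemma sub0_trans (n : nat) (c a b : form0 n) :
  List.In a (sub0 c) -> List.In b (sub0 a) -> List.In b (sub0 c).
Proof.
elim: c => [p|c IH|c IHc d IHd|i k c IH] /=.
- by case=> [<-|[]].
- by case=> [<-|Ha] //= Hb; right; apply: IH.
- case=> [<-|/List.in_app_iff [Ha|Ha]] //= Hb; right.
    by apply: In_app_l; apply: IHc.
  by apply: In_app_r; apply: IHd.
- by case=> [<-|Ha] //= Hb; right; apply: IH.
Qed.

Lemma sub0L_closed (n : nat) (f : form n) (a b : form0 n) :
  List.In a (sub0L f) -> List.In b (sub0 a) -> List.In b (sub0L f).
Proof.
elim: f => [c|g IH|g IHg h IHh|J k g IH] /=.
- by apply: sub0_trans.
- by [].
- move=> /List.in_app_iff [Ha|Ha] Hb.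
    by apply: In_app_l; apply: IHg.
  by apply: In_app_r; apply: IHh.
- by [].
Qed.

Lemma ext_le_trans a b c : ext_le a b -> ext_le b c -> ext_le a c.
Proof. case: a; case: b; case: c => //= *; apply: leq_trans; eassumption. Qed.

Lemma newM_QNGDM (n : nat) (M : premodel n) (w : W M) (phi : form n) :
  is_QNGDM M -> is_QNGDM (newM w phi).
Proof.
move=> HM J x y HJ r /=.
case E: (_ && _); last by [].
move=> Hr; have [Hi [delta [Hsum Hsub]]] := HM J _ _ HJ r Hr.
split; last first.
  exists delta; split => // J' HJ' HJJ' /=; rewrite E; by apply: Hsub.
apply: ext_le_trans Hi; apply: xsum_le => a.
case: (excluded_middle_informative (List.In a (L0 phi))) => Ha.
- have Hc : forall b, List.In b (sub0 a) -> List.In b (L0 phi).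
    by move=> b Hb; apply: (sub0L_closed Ha).
  have Heq : (fun i : 'I_n => if i \in J then D (newM w phi) i x a else Fin 0) =
             (fun i : 'I_n => if i \in J then D M i (mw x) a else Fin 0).
    apply: functional_extensionality => i /=.
    by case: excluded_middle_informative.
  left; rewrite Heq.
  case: excluded_middle_informative => H1; case: excluded_middle_informative => H2 //.
  + by case: H2; apply/(sat0_pres _ Hc).
  + by case: H1; apply/(sat0_pres _ Hc).
- right; destruct (excluded_middle_informative (sat0 (newM w phi) y a)); first by [].
  apply: xsum0 => i /=; case: (i \in J) => //.
  by case: excluded_middle_informative.
Qed.

Theorem lemma1 (n : nat) (phi : form n) :
  (exists (M : premodel n) (w : W M), is_QNGDM M /\ sat M w phi) ->
  exists (M' : premodel n) (w' : W M'),
    is_QNGDM M' /\ finite_premodel M' /\ sat M' w' phi.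
Proof.
move=> [M [w [HM Hs]]].
have HN : 0 < Nb w phi by [].
exists (newM w phi), ((@ord0 (Dm phi), Ordinal HN) : W' w phi).
split; first by apply: newM_QNGDM.
split.
  split.
    by exists (enum {: 'I_(Dm phi).+1 * 'I_(Nb w phi)}) => x; apply: In_mem; rewrite mem_enum.
  move=> i x; exists (L0 phi) => a /=.
  by case: excluded_middle_informative.
apply/(sat_pres (x := ((@ord0 (Dm phi), Ordinal HN) : W' w phi))) => //.
by rewrite addn0.
Qed.
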